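(* For all $n\ge1$ and all integers $h$ with $0\le h\le \frac12n^2-\frac52n$, $|\mathcal C^h_n| \ge n^{n-2}\left(\frac{n^2-3n}{2(n+h)}\right)^h$.
   Context: Graphs are finite and simple. For an integer $h\ge0$, $\mathcal C^h_n$ is the set of connected graphs on vertex set $[n]$ with at most $h+n-1$ edges. *)

(* Defs.v *)
From mathcomp Require Import all_boot all_order all_algebra.
Set Implicit Arguments. Unset Strict Implicit. Unset Printing Implicit Defensive.
Import Order.TTheory GRing.Theory Num.Theory.

Definition simple_graph (n : nat) (E : {set {set 'I_n}}) : bool :=
  [forall e in E, #|e| == 2].

Definition adj (n : nat) (E : {set {set 'I_n}}) : rel 'I_n :=
  fun x y => [set x; y] \in E.

Definition connected_graph (n : nat) (E : {set {set 'I_n}}) : bool :=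
  [forall x, forall y, connect (adj E) x y].

Definition Chn (h n : nat) : {set {set {set 'I_n}}} :=
  [set E : {set {set 'I_n}} |
     [&& simple_graph E, connected_graph E & #|E| <= h + n - 1]].

(* Main.v *)
Require Import Defs.
From mathcomp Require Import all_boot all_order all_algebra.
From mathcomp Require Import zify.
Set Implicit Arguments. Unset Strict Implicit. Unset Printing Implicit Defensive.
Import Order.TTheory GRing.Theory Num.Theory.

Section Prufer.
Variable n : nat.
Variable r : 'I_n.
Notation V := 'I_n.

Definition cand (D : {set V}) (s : seq V) (v : V) : bool :=
  (v \notin D) && (v != r) && (v \notin s).

Fixpoint dec (s : seq V) (D : {set V}) : V -> V :=
  match s with
  | [::] => fun _ => r
  | a :: s' => match [pick v | cand D (a :: s') v] with
               | Some l => fun v => if v == l then a else dec s' (l |: D) v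
               | None => fun _ => r
               end
  end.

Lemma dec_val s D v : dec s D v \in r :: s.
Proof.
elim: s D v => [|a s IH] D v /=; first by rewrite inE.
case: pickP => [l Hl|_]; last by rewrite inE eqxx.
case: (v == l); first by rewrite !inE eqxx orbT.
have := IH (l |: D) v; rewrite !inE => /orP[->//|->]; by rewrite !orbT.
Qed.

Definition reach (p : V -> V) := forall v, exists k, iter k p v = r.

Lemma dec_reach s D : reach (dec s D).
Proof.
elim: s D => [|a s IH] D v /=; first by exists 1.
case: pickP => [l Hl|_]; last by exists 1.
set q := dec s (l |: D).
set p := fun v => if v == l then a else q v.
move: Hl; rewrite /cand !inE negb_or => /andP[/andP[_ lr] /andP[la ls]].
have qnl w : q w != l.
  apply/eqP => E; have := dec_val s (l |: D) w; rewrite -/q E inE.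
  by rewrite (negbTE ls) (negbTE lr).
have itnl w k : w != l -> iter k q w != l by case: k => //= k.
have itpq w k : w != l -> iter k p w = iter k q w.
  move=> wl; elim: k => //= k ->; by rewrite /p (negbTE (itnl _ _ wl)).
have [vl|vl] := eqVneq v l.
  have [k Hk] := IH (l |: D) a; exists k.+1.
  by rewrite iterSr /p vl eqxx itpq // eq_sym.
have [k Hk] := IH (l |: D) v; exists k; by rewrite itpq.
Qed.

Lemma reach_neq p v : reach p -> v != r -> p v != v.
Proof.
move=> R vr; apply/eqP => E; have [k Hk] := R v.
by rewrite iter_fix // in Hk; rewrite Hk eqxx in vr.
Qed.

Lemma dec_D s (D : {set V}) v : v \in D -> dec s D v = r.
Proof.
elim: s D => [|a s IH] D vD //=.
case: pickP => [l Hl|//].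
have -> : (v == l) = false.
  by apply/negbTE; apply: contraNneq (proj1 (andP (proj1 (andP Hl)))) => <-.
by apply: IH; rewrite inE vD orbT.
Qed.

Lemma dec_r s D : dec s D r = r.
Proof.
elim: s D => [|a s IH] D //=.
case: pickP => [l Hl|//].
have -> : (r == l) = false.
  by apply/negbTE; apply: contraNneq (proj2 (andP (proj1 (andP Hl)))) => ->.
exact: IH.
Qed.

Lemma cand_ex (s : seq V) (D : {set V}) : #|D| + size s + 2 <= n -> exists v, cand D s v.
Proof.
move=> H; case: (boolP [exists x, cand D s x]) => [/existsP//|/existsPn Hn]; exfalso.
have sub : [set: V] \subset D :|: (r |: [set x | x \in s]).
  apply/subsetP => x _; have := Hn x; rewrite /cand !inE.
  by case: (x \in D) => //=; case: (x == r) => //=; case: (x \in s).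
have := subset_leq_card sub; rewrite cardsT card_ord.
have h1 := (leq_card_setU D (r |: [set x | x \in s])).1.
have h2 := (leq_card_setU [set r] [set x | x \in s]).1.
rewrite cards1 in h2.
have h3 : #|[set x | x \in s]| <= size s by rewrite cardsE; exact: card_size.
move=> h4; have h5 := leq_trans h4 (leq_trans h1 (leq_add (leqnn _) (leq_trans h2 (leq_add (leqnn 1) h3)))).
move: H h5; clear; lia.
Qed.


Lemma auxS a b : a + b.+1 + 2 <= n -> a.+1 + b + 2 <= n.
Proof. lia. Qed.

Lemma dec_img (s : seq V) (D : {set V}) v : #|D| + size s + 2 <= n -> v \in s ->
  exists w, [/\ w \notin D, w != r & dec s D w = v].
Proof.
elim: s D => [|a s IH] D //= H.
case: pickP => [l Hl|Hno]; last first.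
  by have [x Hx] := cand_ex (s := a :: s) H; rewrite Hno in Hx.
move: (Hl); rewrite /cand !inE negb_or => /andP[/andP[lD lr] /andP[la ls]].
move=> /orP[/eqP->|vs].
  by exists l; rewrite eqxx; split.
have H' : #|l |: D| + size s + 2 <= n.
  by rewrite cardsU1 lD add1n; apply: auxS.
have [w [wD wr Hw]] := IH (l |: D) H' vs.
move: wD; rewrite !inE negb_or => /andP[wl wD].
by exists w; split => //; rewrite (negbTE wl).
Qed.

Lemma cand_char (s : seq V) (D : {set V}) v : #|D| + size s + 2 <= n ->
  cand D s v = (v \notin D) && (v != r) &&
     ~~ [exists w, (w \notin D) && (w != r) && (dec s D w == v)].
Proof.
move=> H; rewrite /cand; case: (v \in D) => //=; case: eqP => //= vr.
congr negb; apply/idP/existsP.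
  by move=> /(dec_img H) [w [wD wr Hw]]; exists w; rewrite wD wr Hw eqxx.
move=> [w /andP[_ /eqP Hw]]; have := dec_val s D w; rewrite Hw inE.
by move/eqP: vr => /negbTE ->.
Qed.

Lemma dec_inj (s s' : seq V) (D : {set V}) : size s = size s' ->
  #|D| + size s + 2 <= n -> dec s D =1 dec s' D -> s = s'.
Proof.
elim: s s' D => [|a t IH] [|a' t'] D // [Hsz] H Hd.
have Hc : cand D (a :: t) =1 cand D (a' :: t').
  move=> v; rewrite (@cand_char (a :: t) D v H) (@cand_char (a' :: t') D v); last first.
    by rewrite /= -Hsz.
  by congr (_ && ~~ _); apply: eq_existsb => w; rewrite Hd.
have Hp := eq_pick Hc.
move: Hd; rewrite /= Hp.
case: pickP => [l Hl|Hno] Hd; last first.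
  by have [x Hx] := cand_ex (s := a :: t) H; rewrite Hc Hno in Hx.
move: (Hl); rewrite /cand !inE negb_or => /andP[/andP[lD lr] /andP[la ls]].
have := Hd l; rewrite eqxx => ->; congr cons.
apply: IH (l |: D) Hsz _ _; first by rewrite cardsU1 lD add1n; apply: auxS.
move=> v; have [vl|vl] := eqVneq v l.
  by rewrite !dec_D // vl setU11.
by have := Hd v; rewrite (negbTE vl).
Qed.

Definition edges (p : V -> V) : {set {set V}} :=
  (fun v => [set v; p v]) @: [set v | v != r].

Lemma iter2 (q : V -> V) v k : q (q v) = v -> iter k q v \in [set v; q v].
Proof.
move=> H; elim: k => [|k IH] /=; first by rewrite !inE eqxx.
move: IH; rewrite !inE => /orP[/eqP->|/eqP->]; by rewrite ?H eqxx ?orbT.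
Qed.

Lemma edges_inj p q : reach p -> reach q -> edges p = edges q ->
  forall v, v != r -> p v = q v.
Proof.
move=> Rp Rq E v vr; have [k Hk] := Rq v.
elim: k v vr Hk => [|k IH] v vr Hk; first by move: Hk => /= Hk; rewrite Hk eqxx in vr.
rewrite iterSr in Hk.
have : [set v; q v] \in edges p.
  by rewrite E; apply/imsetP; exists v => //; rewrite inE.
case/imsetP => w; rewrite inE => wr Hvw.
have wIn : w \in [set v; q v] by rewrite Hvw !inE eqxx.
have pwIn : p w \in [set v; q v] by rewrite Hvw !inE eqxx orbT.
have [qr|qr] := eqVneq (q v) r.
  move: wIn; rewrite !inE qr (negbTE wr) orbF => /eqP wv.
  move: pwIn; rewrite !inE wv (negbTE (reach_neq Rp vr)) /= => /eqP ->.
  by rewrite qr.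
have IHy := IH _ qr Hk.
have [wv|wv] := eqVneq w v.
  by move: pwIn; rewrite !inE wv (negbTE (reach_neq Rp vr)) /= => /eqP.
move: wIn; rewrite !inE (negbTE wv) /= => /eqP wy.
move: pwIn; rewrite !inE wy (negbTE (reach_neq Rp qr)) orbF => /eqP pyv.
have qqv : q (q v) = v by rewrite -IHy.
have qqqv : q (q (q v)) = q v by rewrite qqv.
have := iter2 k qqqv; rewrite Hk qqv !inE eq_sym (negbTE qr) eq_sym.
by rewrite (negbTE vr).
Qed.

Lemma adj_sym (E : {set {set V}}) : symmetric (adj E).
Proof. by move=> x y; rewrite /adj setUC. Qed.

Lemma edges_conn p : reach p -> connected_graph (edges p).
Proof.
move=> R.
have toR x : connect (adj (edges p)) x r.
  have [k Hk] := R x; elim: k x Hk => [|k IH] x Hk; first by move: Hk => /= ->.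
  rewrite iterSr in Hk.
  have [xr|xr] := eqVneq x r; first by rewrite xr.
  apply: connect_trans (IH _ Hk); apply: connect1.
  by rewrite /adj; apply/imsetP; exists x; rewrite ?inE.
apply/forallP => x; apply/forallP => y.
apply: connect_trans (toR x) _.
by rewrite (sym_connect_sym (@adj_sym (edges p))).
Qed.

Lemma edges_simple p : reach p -> simple_graph (edges p).
Proof.
move=> R; apply/forallP => e; apply/implyP => /imsetP[v]; rewrite inE => vr ->.
by rewrite cards2 [v == _]eq_sym; have := reach_neq R vr; case: (p v == v).
Qed.

Lemma edges_card p : #|edges p| <= n.-1.
Proof.
apply: leq_trans (leq_imset_card _ _) _.
by rewrite -[n in n.-1]card_ord -(cardsC1 r); apply: subset_leq_card; apply/subsetP => x; rewrite !inE.
Qed.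


End Prufer.

Lemma expn_mono a b h : a <= b -> a ^ h <= b ^ h.
Proof. move=> H; elim: h => [|h IH] //; rewrite !expnS; exact: leq_mul. Qed.

Lemma ffact_ineq x b h : b <= x -> b ^_ h * x ^ h <= x ^_ h * b ^ h.
Proof.
move=> bx; elim: h => [|h IH] //.
rewrite !ffactnSr !expnS.
have H2 : (b - h) * x <= (x - h) * b.
  case: (leqP b h) => bh; first by rewrite (eqP (_ : b - h == 0)) ?subn_eq0.
  nia.
have := leq_mul IH H2.
have E1 : b ^_ h * (b - h) * (x * x ^ h) = b ^_ h * x ^ h * ((b - h) * x) by nia.
have E2 : x ^_ h * (x - h) * (b * b ^ h) = x ^_ h * b ^ h * ((x - h) * b) by nia.
by rewrite E1 E2.
Qed.

Lemma bin_ineq x b h : b <= x -> 'C(b, h) * x ^ h <= 'C(x, h) * b ^ h.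
Proof.
move=> bx; rewrite -(leq_pmul2r (fact_gt0 h)).
rewrite mulnAC bin_ffact [X in _ <= X]mulnAC bin_ffact; exact: ffact_ineq.
Qed.

Lemma arith n h K : 5 <= n -> 2 * h + 5 * n <= n ^ 2 ->
  n ^ (n - 2) * 'C('C(n, 2) - n.-1, h) <= K * 'C(h + n - 1, h) ->
  n ^ (n - 2) * (n ^ 2 - 3 * n) ^ h <= K * (2 * (n + h)) ^ h.
Proof.
move=> n5 hh Hc.
have H2 : 2 * 'C(n, 2) = n * n.-1 by rewrite -(mul_bin_diag n 1) bin1.
set a0 := 'C(n, 2) - n.-1.
have Ha0 : 2 * a0 = n ^ 2 - 3 * n + 2 by rewrite /a0; nia.
set b := h + n - 1.
have ba0 : b <= a0 by rewrite /b; nia.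
have bpos : 0 < b by rewrite /b; lia.
have Cpos : 0 < 'C(b, h) by rewrite bin_gt0 /b; lia.
set c := n ^ 2 - 3 * n.
set d := 2 * (n + h).
have cd : b * c <= a0 * d.
  have Ha0c : 2 * a0 = c + 2 by []. rewrite -(leq_pmul2l (isT : 0 < 2)) [X in _ <= X]mulnA Ha0c.
  have bnh : b <= n + h by rewrite /b; lia.
  rewrite /d; move: bnh; clear; move: b c (n + h) => x y z H; nia.
have cdh : b ^ h * c ^ h <= a0 ^ h * d ^ h by rewrite -!expnMn; exact: expn_mono.
have Hb := bin_ineq h ba0.
set t := n ^ (n - 2).
have Pp : 0 < 'C(b, h) * b ^ h by rewrite muln_gt0 Cpos expn_gt0 bpos.
rewrite -(leq_pmul2r Pp).
move: cdh Hb Hc; rewrite -/a0 -/b -/t.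
move: t ('C(a0, h)) ('C(b, h)) (b ^ h) (c ^ h) (a0 ^ h) (d ^ h) => T Ca Cb B C A D cdh Hb Hc.
have S1 : T * C * (Cb * B) <= (T * Cb) * (A * D).
  have -> : T * C * (Cb * B) = (T * Cb) * (B * C) by nia.
  exact: leq_mul (leqnn _) cdh.
have S2 : (T * Cb) * (A * D) <= (T * D) * (Ca * B).
  have -> : (T * Cb) * (A * D) = (T * D) * (Cb * A) by nia.
  exact: leq_mul (leqnn _) Hb.
have S3 : (T * D) * (Ca * B) <= (B * D) * (K * Cb).
  have -> : (T * D) * (Ca * B) = (B * D) * (T * Ca) by nia.
  exact: leq_mul (leqnn _) Hc.
have -> : K * D * (Cb * B) = (B * D) * (K * Cb) by nia.
exact: leq_trans S1 (leq_trans S2 S3).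
Qed.

Lemma trees_exist n (r : 'I_n) : 2 <= n ->
  exists Tr : {set {set {set 'I_n}}}, #|Tr| = n ^ (n - 2) /\
    forall T, T \in Tr -> [&& simple_graph T, connected_graph T & #|T| <= n.-1].
Proof.
move=> n2.
pose f (t : (n - 2).-tuple 'I_n) := edges r (dec r (val t) set0).
exists (f @: [set: (n - 2).-tuple 'I_n]); split.
  rewrite card_imset ?cardsT ?card_tuple ?card_ord //.
  move=> t1 t2 E; apply: val_inj.
  apply: (@dec_inj n r _ _ set0); first by rewrite !size_tuple.
    by rewrite cards0 size_tuple; lia.
  move=> v; have [->|vr] := eqVneq v r; first by rewrite !dec_r.
  exact: edges_inj (@dec_reach _ _ _ _) (@dec_reach _ _ _ _) E v vr.
move=> T /imsetP[t _ ->]; rewrite /f.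
by rewrite edges_simple ?edges_conn ?edges_card //; exact: dec_reach.
Qed.

Section Count.
Variables (n h : nat).
Notation V := 'I_n.
Variable Tr : {set {set {set V}}}.
Hypothesis HTr : forall T, T \in Tr -> [&& simple_graph T, connected_graph T & #|T| <= n.-1].
Hypothesis n1 : 1 <= n.

Definition Pairs : {set {set V}} := [set e : {set V} | #|e| == 2].
Definition FT (T : {set {set V}}) := [set S : {set {set V}} | S \subset Pairs :\: T & #|S| == h].
Definition GE (E : {set {set V}}) := [set S : {set {set V}} | S \subset E & #|S| == h].

Lemma count_main :
  #|Tr| * 'C('C(n, 2) - n.-1, h) <= #|Chn h n| * 'C(h + n - 1, h).
Proof.
have cP : #|Pairs| = 'C(n, 2) by rewrite card_draws card_ord.
have S1 : #|Tr| * 'C('C(n, 2) - n.-1, h) <= \sum_(T in Tr) #|FT T|.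
  rewrite -sum_nat_const; apply: leq_sum => T HT.
  rewrite /FT cards_draws; apply: leq_bin2l.
  rewrite cardsD cP; apply: leq_sub2l.
  have := HT; move/HTr => /and3P[_ _ cT].
  apply: leq_trans cT; apply: subset_leq_card; exact: subsetIr.
pose X := [set p : {set {set V}} * {set {set V}} | (p.1 \in Tr) && (p.2 \in FT p.1)].
pose Y := [set p : {set {set V}} * {set {set V}} | (p.1 \in Chn h n) && (p.2 \in GE p.1)].
have S2 : \sum_(T in Tr) #|FT T| = #|X|.
  rewrite (eq_bigr (fun T => \sum_(S in FT T) 1)); last by move=> T _; rewrite sum1_card.
  rewrite pair_big_dep -sum1_card; apply: eq_bigl => p; by rewrite /X [in RHS]inE.
have S4 : #|Y| <= #|Chn h n| * 'C(h + n - 1, h).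
  have -> : #|Y| = \sum_(E in Chn h n) #|GE E|.
    rewrite (eq_bigr (fun E => \sum_(S in GE E) 1)); last by move=> E _; rewrite sum1_card.
    rewrite pair_big_dep -sum1_card; apply: eq_bigl => p; by rewrite /Y [p \in _]inE.
  rewrite -sum_nat_const; apply: leq_sum => E; rewrite inE => /and3P[_ _ cE].
  by rewrite /GE cards_draws; apply: leq_bin2l.
pose f (p : {set {set V}} * {set {set V}}) := (p.1 :|: p.2, p.2).
have S3 : #|X| <= #|Y|.
  rewrite -(@card_in_imset _ _ f X).
    apply: subset_leq_card; apply/subsetP => q /imsetP[[T S]]; rewrite inE /= => /andP[HT HS] ->.
    move: HS; rewrite /FT inE => /andP[SP /eqP cS].
    have := HT; move/HTr => /and3P[sT cT kT].
    rewrite inE /= /GE [S \in _]inE subsetUr cS eqxx andbT.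
    rewrite /Chn in_set andbT; apply/and3P; split.
    - apply/forallP => e; apply/implyP; rewrite inE => /orP[eT|eS].
        by move/forallP: sT => /(_ e); rewrite eT.
      by move/subsetP: SP => /(_ e eS); rewrite !inE => /andP[_].
    - apply/forallP => x; apply/forallP => y.
      move/forallP: cT => /(_ x) /forallP /(_ y).
      apply: connect_sub => u v Huv; apply: connect1.
      by rewrite /adj inE; rewrite /adj in Huv; rewrite Huv.
    - apply: leq_trans (leq_card_setU T S).1 _; rewrite cS; lia.
  move=> [T1 S1'] [T2 S2']; rewrite !inE /= => /andP[_ H1] /andP[_ H2] [E12 ES].
  subst S2'; congr pair; apply/setP => x.
  move: H1 H2 => /andP[/subsetP D1 _] /andP[/subsetP D2 _].
  move/setP: E12 => /(_ x); rewrite !inE.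
  case: (boolP (x \in S1')) => xS; last by rewrite !orbF.
  have := D1 x xS; have := D2 x xS; rewrite !inE.
  by move=> /andP[/negbTE-> _] /andP[/negbTE-> _].
lia.
Qed.
End Count.

Local Open Scope ring_scope.

Theorem lemma4 (n h : nat) (hn : (1 <= n)%N) (hh : (2 * h + 5 * n <= n ^ 2)%N) :
  (n%:R ^+ (n - 2)%N) *
    (((n%:R ^+ 2 - 3 * n%:R) / (2 * (n%:R + h%:R))) ^+ h)
  <= (#|Chn h n|)%:R :> rat.
Proof.
have n5 : (5 <= n)%N by nia.
have [Tr [cTr HTr]] := trees_exist (Ordinal hn) (ltnW (leq_trans (isT : (2 < 5)%N) n5)).
have Hc := @count_main n h Tr HTr hn.
rewrite cTr in Hc.
have Ha := arith n5 hh Hc.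
have e1 : (n%:R ^+ 2 - 3 * n%:R : rat) = (n ^ 2 - 3 * n)%N%:R.
  rewrite natrB; last by nia.
  by rewrite natrX natrM.
have e2 : (2 * (n%:R + h%:R) : rat) = (2 * (n + h))%N%:R by rewrite natrM natrD.
have dpos : (0 : rat) < ((2 * (n + h))%N%:R) ^+ h.
  by apply: exprn_gt0; rewrite ltr0n; nia.
rewrite e1 e2 expr_div_n mulrA ler_pdivrMr // -!natrX -!natrM ler_nat.
exact: Ha.
Qed.
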